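(* Consider the lower-bound construction with parameters $n_1,n_2,d,d_s,x$ where $0<x\le d_s$, $d\ge\max\{d_s\log n_1,\log^2 n_1\}$, $n_1\ge 2d^3$, and the $d$-regular graph on $S_1$ is an expander (its normalized Laplacian has spectral gap bounded below by an absolute constant). Let $r_{S_1}(s,t)$ be the effective resistance between $s$ and $t$ in the subgraph induced on $S_1\cup\{s,t\}$ and $r_{S_2}(s,t)$ the one in the subgraph induced on $S_2\cup\{s,t\}$ (when $x<d_s$). Then $$r_{S_1}(s,t)=\frac1x+O\Big(\frac{\log n_1}{dx}\Big)=\frac1x+O\Big(\frac{1}{d_s x}\Big),\qquad r_{S_2}(s,t)=\frac{2}{d_s-x}.$$
   Context: Lower-bound construction: $S_1$ and $S_2$ are disjoint vertex sets with $|S_1|=n_1$, $|S_2|=n_2$, $n_2\ll n_1$. On $S_1$ there is a $d$-regular expander graph; $S_2$ has no internal edges. A source vertex $s$ is added with $d_s$ neighbors: $x$ vertices $\mathcal{N}_1\subset S_1$ and $d_s-x$ vertices $\mathcal{N}_2\subset S_2$, chosen uniformly at random. A sink vertex $t$ is added and joined to every vertex of $S_1\cup S_2$. There are no other edges (in particular no edge $st$ and no edges between $S_1$ and $S_2$). Effective resistance in a graph $H$ is $(\mathbf{e}_s-\mathbf{e}_t)^T\mathbf{L}_H^\dagger(\mathbf{e}_s-\mathbf{e}_t)$, $\mathbf{L}_H$ the Laplacian of $H$. Constants hidden in $O(\cdot)$ are absolute (may depend on the expansion constant of $S_1$). *)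

(* Defs.v *)
From HB Require Import structures.
From mathcomp Require Import all_boot all_order all_algebra.
From mathcomp Require Import reals exp.
From Stdlib Require Import ClassicalEpsilon.
Set Implicit Arguments. Unset Strict Implicit. Unset Printing Implicit Defensive.
Import Order.TTheory GRing.Theory Num.Theory.
Local Open Scope ring_scope.

Section Graphs.
Variable R : realType.

(* Moore--Penrose pseudoinverse, characterised by the four Penrose equations
   (it exists and is unique for every real matrix). *)
Definition is_MP_pinv (n : nat) (A P : 'M[R]_n) : Prop :=
  [/\ A *m P *m A = A, P *m A *m P = P, (A *m P)^T = A *m P & (P *m A)^T = P *m A].

Definition mp_pinv (n : nat) (A : 'M[R]_n) : 'M[R]_n :=
  epsilon (inhabits 0) (fun P => is_MP_pinv A P).

(* Simple graphs on a finite type T: a symmetric irreflexive relation. *)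
Definition gdeg (T : finType) (e : rel T) (v : T) : nat := #|[set u | e v u]|.

Definition laplacian (T : finType) (e : rel T) : 'M[R]_#|T| :=
  \matrix_(i, j) if i == j then (gdeg e (enum_val i))%:R
                 else - (e (enum_val i) (enum_val j))%:R.

Definition eff_res (T : finType) (e : rel T) (s t : T) : R :=
  let b : 'cV[R]_#|T| :=
    \col_i ((enum_val i == s)%:R - (enum_val i == t)%:R) in
  (b^T *m mp_pinv (laplacian e) *m b) 0 0.

Definition induced (T : finType) (e : rel T) (U : {set T}) :
  rel {x : T | x \in U} := fun x y => e (val x) (val y).

(* Effective resistance between s and t in the subgraph induced on U
   (0 by convention if s or t is not in U; never used in that case). *)
Definition eff_res_in (T : finType) (e : rel T) (U : {set T}) (s t : T) : R :=
  match @insub T (fun x => x \in U) {x : T | x \in U} s,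
        @insub T (fun x => x \in U) {x : T | x \in U} t with
  | Some s', Some t' => eff_res (@induced T e U) s' t'
  | _, _ => 0
  end.

Definition regular_simple (n : nat) (e : rel 'I_n) (d : nat) : Prop :=
  [/\ forall i j, e i j = e j i, forall i, ~~ e i i & forall i, gdeg e i = d].

Definition norm_laplacian (n : nat) (e : rel 'I_n) : 'M[R]_n :=
  \matrix_(i, j) ((i == j)%:R
     - (e i j)%:R / Num.sqrt ((gdeg e i)%:R * (gdeg e j)%:R)).

(* Spectral gap lambda_2(M) >= c for a real symmetric PSD matrix M with
   smallest eigenvalue 0: every eigenvalue below c is 0 and the 0-eigenspace
   is one-dimensional (geometric = algebraic multiplicity for symmetric M). *)
Definition spectral_gap_ge (n : nat) (M : 'M[R]_n) (c : R) : Prop :=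
  forall a : R, eigenvalue M a -> a < c ->
    a = 0 /\ \rank (eigenspace M a) = 1%N.

End Graphs.

(* Vertex set of the construction: inl (inl i) = vertex i of S_1,
   inl (inr k) = vertex k of S_2, inr true = s, inr false = t. *)
Definition cvert (n1 n2 : nat) : finType := (('I_n1 + 'I_n2) + bool)%type.

Definition src (n1 n2 : nat) : cvert n1 n2 := inr true.
Definition snk (n1 n2 : nat) : cvert n1 n2 := inr false.

Definition cgraph (n1 n2 : nat) (E1 : rel 'I_n1) (N1 : {set 'I_n1})
  (N2 : {set 'I_n2}) : rel (cvert n1 n2) :=
  fun u v =>
    match u, v with
    | inl (inl i), inl (inl j) => E1 i j
    | inr true, inl (inl i) => i \in N1
    | inl (inl i), inr true => i \in N1
    | inr true, inl (inr k) => k \in N2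
    | inl (inr k), inr true => k \in N2
    | inr false, inl _ => true
    | inl _, inr false => true
    | _, _ => false
    end.

Definition U1 (n1 n2 : nat) : {set cvert n1 n2} :=
  [set v | match v with inl (inr _) => false | _ => true end].
Definition U2 (n1 n2 : nat) : {set cvert n1 n2} :=
  [set v | match v with inl (inl _) => false | _ => true end].

(* Main.v *)
Require Import Defs.
From HB Require Import structures.
From mathcomp Require Import all_boot all_order all_algebra.
From mathcomp Require Import reals exp.
From mathcomp Require Import classical_sets.
From mathcomp Require Import ring lra.
From Stdlib Require Import ClassicalEpsilon Classical.
Import Order.TTheory GRing.Theory Num.Theory.
Local Open Scope ring_scope.

Section MP.
Variable R : realType.


Lemma sq_rV_eq0 (k : nat) (u : 'rV[R]_k) : u *m u^T = 0 -> u = 0.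
Proof.
move=> /(congr1 (fun M : 'M_1 => M 0 0)); rewrite !mxE => H.
apply/rowP => i; rewrite mxE.
have Hge : forall j : 'I_k, true -> 0 <= u 0 j * u^T j 0.
  by move=> j _; rewrite mxE -expr2 sqr_ge0.
have /eqP := H; rewrite psumr_eq0 // => /allP /(_ i (mem_index_enum _)).
by rewrite mxE -expr2 sqrf_eq0 => /eqP.
Qed.

Lemma gram_unit m r (B : 'M[R]_(m, r)) : row_free B -> (B *m B^T) \in unitmx.
Proof.
move=> fB; rewrite -row_free_unit; apply: inj_row_free => v.
move=> /(congr1 (fun M => M *m v^T)); rewrite mul0mx !mulmxA -mulmxA -trmx_mul.
move=> /sq_rV_eq0 vB; apply/eqP; rewrite -(mulmx_free_eq0 _ fB); exact/eqP.
Qed.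

Lemma mp_fact n r (B : 'M[R]_(n, r)) (C : 'M[R]_(r, n)) :
  (B^T *m B) \in unitmx -> (C *m C^T) \in unitmx ->
  is_MP_pinv (B *m C) (C^T *m invmx (C *m C^T) *m invmx (B^T *m B) *m B^T).
Proof.
move=> uB uC.
set iB := invmx (B^T *m B); set iC := invmx (C *m C^T).
have sB : iB^T = iB by rewrite /iB trmx_inv trmx_mul trmxK.
have sC : iC^T = iC by rewrite /iC trmx_inv trmx_mul trmxK.
have hB : iB *m (B^T *m B) = 1%:M by rewrite mulVmx.
have hC : (C *m C^T) *m iC = 1%:M by rewrite mulmxV.
have AP : (B *m C) *m (C^T *m iC *m iB *m B^T) = B *m iB *m B^T.
  by rewrite !mulmxA -(mulmxA B C) -(mulmxA B (C *m C^T)) hC mulmx1.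
have PA : (C^T *m iC *m iB *m B^T) *m (B *m C) = C^T *m iC *m C.
  by rewrite !mulmxA -(mulmxA _ B^T B) -(mulmxA _ iB) hB mulmx1.
split.
- by rewrite AP !mulmxA -(mulmxA _ B^T B) -(mulmxA _ iB) hB mulmx1.
- rewrite PA !mulmxA -(mulmxA (C^T *m iC) C C^T).
  by rewrite -(mulmxA (C^T *m iC) (C *m C^T) iC) hC mulmx1.
- by rewrite AP !trmx_mul trmxK sB mulmxA.
- by rewrite PA !trmx_mul trmxK sC mulmxA.
Qed.

Lemma mp_exists n (A : 'M[R]_n) : exists P, is_MP_pinv A P.
Proof.
have fBt : row_free (col_base A)^T by rewrite /row_free mxrank_tr; exact: col_base_full.
have fC : row_free (row_base A) by exact: row_base_free.
have uB : ((col_base A)^T *m col_base A) \in unitmx.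
  by have := @gram_unit _ _ _ fBt; rewrite trmxK.
have uC := @gram_unit _ _ _ fC.
have := @mp_fact _ _ _ _ uB uC; rewrite mulmx_base => H; eexists; exact: H.
Qed.

Lemma mp_pinvP n (A : 'M[R]_n) : is_MP_pinv A (mp_pinv A).
Proof.
rewrite /mp_pinv; apply: (epsilon_spec (inhabits 0) (fun P => is_MP_pinv A P)).
exact: mp_exists.
Qed.
End MP.

Section Lap.
Variable R : realType.
Variable T : finType.
Variable e : rel T.
Hypothesis esym : forall u w, e u w = e w u.
Hypothesis eirr : forall u, e u u = false.

Definition Lap (f : T -> R) (u : T) : R := \sum_w (e u w)%:R * (f u - f w).

Lemma sum_enum (F : T -> R) : \sum_(i < #|T|) F (enum_val i) = \sum_u F u.
Proof. symmetry; rewrite (reindex (@enum_val T (pred_of_simpl (@predT T)))) //; exact: onW_bij (enum_val_bij T). Qed.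

Lemma sum_rank (G : 'I_#|T| -> R) : \sum_i G i = \sum_u G (enum_rank u).
Proof. by rewrite -sum_enum; apply: eq_bigr => i _; rewrite enum_valK. Qed.

Lemma gdegE u : (gdeg e u)%:R = \sum_w (e u w)%:R :> R.
Proof.
rewrite /gdeg -sum1_card natr_sum big_mkcond /=; apply: eq_bigr => w _.
by rewrite inE; case: (e u w).
Qed.

Lemma sum_pick (F : T -> R) s : \sum_u F u * (u == s)%:R = F s.
Proof.
rewrite (bigD1 s) //= eqxx mulr1 big1 ?addr0 // => u /negbTE ->.
by rewrite mulr0.
Qed.

Lemma lapE : laplacian R e = \matrix_(i, j)
   ((i == j)%:R * (gdeg e (enum_val i))%:R - (e (enum_val i) (enum_val j))%:R).
Proof.
apply/matrixP => i j; rewrite !mxE; case: eqP => [->|_].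
  by rewrite eirr mul1r subr0.
by rewrite mul0r sub0r.
Qed.

Lemma lap_sym : (laplacian R e)^T = laplacian R e.
Proof.
apply/matrixP => i j; rewrite !lapE !mxE.
case: (eqVneq i j) => [->//|ne]; have ne' := ne; rewrite eq_sym in ne'.
rewrite ?(negbTE ne) ?(negbTE ne').
by rewrite !mul0r esym.
Qed.

Definition vec (f : T -> R) : 'cV[R]_#|T| := \col_i f (enum_val i).

Lemma lap_vec f i : (laplacian R e *m vec f) i 0 = Lap f (enum_val i).
Proof.
rewrite lapE !mxE /Lap.
under eq_bigr => j _ do rewrite !mxE mulrBl.
rewrite sumrB (bigD1 i) //= eqxx mul1r big1 ?addr0; last first.
  by move=> j /negbTE; rewrite eq_sym => ->; rewrite !mul0r.
under [in RHS]eq_bigr => w _ do rewrite mulrBr.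
rewrite sumrB -big_distrl /= -gdegE (sum_enum (fun w => (e (enum_val i) w)%:R * f w)).
by rewrite mulrC.
Qed.

Definition bvec (s t : T) (u : T) : R := (u == s)%:R - (u == t)%:R.

Lemma eff_res_pot (s t : T) (f : T -> R) :
  (forall u, Lap f u = bvec s t u) -> eff_res R e s t = f s - f t.
Proof.
move=> Hf.
have Lb : laplacian R e *m vec f = \col_i bvec s t (enum_val i).
  by apply/colP => i; rewrite lap_vec Hf mxE.
rewrite /eff_res -[X in X^T *m _ *m X]/(\col_i bvec s t (enum_val i)) -Lb.
have [H1 _ _ _] := @mp_pinvP R _ (laplacian R e).
rewrite trmx_mul lap_sym -!mulmxA (mulmxA (laplacian R e)) (mulmxA _ (laplacian R e)) H1.
rewrite Lb mxE.
under eq_bigr => i _ do rewrite !mxE.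
rewrite (sum_enum (fun u => f u * bvec s t u)).
under eq_bigr => u _ do rewrite /bvec mulrBr.
by rewrite sumrB !sum_pick.
Qed.

Lemma quad_id (g : T -> R) :
  \sum_u \sum_w (e u w)%:R * (g u - g w) ^+ 2 = 2 * \sum_u g u * Lap g u.
Proof.
have E1 : \sum_u \sum_w (e u w)%:R * (g u - g w) ^+ 2 =
   \sum_u \sum_w (e u w)%:R * (g u * (g u - g w)) +
   \sum_u \sum_w (e u w)%:R * (g w * (g w - g u)).
  rewrite -big_split /=; apply: eq_bigr => u _; rewrite -big_split /=.
  by apply: eq_bigr => w _; rewrite -mulrDr; congr (_ * _); ring.
rewrite E1 [X in _ + X]exchange_big /=.
have E2 : \sum_j \sum_i (e i j)%:R * (g j * (g j - g i)) =
          \sum_u \sum_w (e u w)%:R * (g u * (g u - g w)).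
  by apply: eq_bigr => u _; apply: eq_bigr => w _; rewrite esym.
rewrite E2 mulr_natl mulr2n; congr (_ + _); rewrite /Lap;
  by apply: eq_bigr => u _; rewrite big_distrr; apply: eq_bigr => w _ /=; ring.
Qed.

Lemma pot_exists s t m : e s m -> e m t ->
  exists f, forall u, Lap f u = bvec s t u.
Proof.
move=> esm emt.
have key : forall c : 'cV[R]_#|T|, laplacian R e *m c = 0 ->
    c (enum_rank s) 0 = c (enum_rank t) 0.
  move=> c Lc; pose g u := c (enum_rank u) 0.
  have vg : vec g = c by apply/colP => i; rewrite mxE /g enum_valK.
  have Lg : forall u, Lap g u = 0.
    by move=> u; rewrite -(enum_rankK u) -lap_vec vg Lc mxE.
  have Q0 : \sum_u \sum_w (e u w)%:R * (g u - g w) ^+ 2 = 0.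
    by rewrite quad_id big1 ?mulr0 // => u _; rewrite Lg mulr0.
  have nn : forall u w, 0 <= (e u w)%:R * (g u - g w) ^+ 2 :> R.
    by move=> u w; rewrite mulr_ge0 // sqr_ge0.
  have Z : forall u w, (e u w)%:R * (g u - g w) ^+ 2 = 0 :> R.
    move=> u w; move/eqP: Q0; rewrite psumr_eq0; last first.
      by move=> i _; apply: sumr_ge0 => j _; exact: nn.
    move/allP/(_ u (mem_index_enum _))/eqP/eqP; rewrite psumr_eq0; last first.
      by move=> j _; exact: nn.
    by move/allP/(_ w (mem_index_enum _))/eqP.
  have Zs := Z s m; have Zt := Z m t.
  rewrite esm mul1r in Zs; rewrite emt mul1r in Zt.
  move/eqP: Zs; rewrite sqrf_eq0 subr_eq0 => /eqP Hs.
  move/eqP: Zt; rewrite sqrf_eq0 subr_eq0 => /eqP Ht.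
  by rewrite -/(g s) -/(g t) Hs Ht.
have sub : ((\col_i bvec s t (enum_val i))^T <= laplacian R e)%MS.
  rewrite submxE; apply/eqP/matrixP => i j; rewrite !mxE.
  have Lc : laplacian R e *m col j (cokermx (laplacian R e)) = 0.
    by rewrite colE mulmxA mulmx_coker mul0mx.
  have := key _ Lc; rewrite !mxE => K.
  under eq_bigr => k _ do rewrite !mxE.
  rewrite sum_rank.
  under eq_bigr => u _ do rewrite enum_rankK.
  under eq_bigr => u _ do rewrite /bvec mulrBl.
  rewrite sumrB.
  under eq_bigr => u _ do rewrite mulrC.
  under [X in _ - X]eq_bigr => u _ do rewrite mulrC.
  by rewrite !sum_pick K subrr.
case/submxP: sub => D HD.
exists (fun u => D 0 (enum_rank u)) => u.
rewrite -(enum_rankK u) -lap_vec.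
have -> : vec (fun u => D 0 (enum_rank u)) = D^T.
  by apply/colP => i; rewrite !mxE enum_valK.
have : (D *m laplacian R e)^T = \col_i bvec s t (enum_val i).
  by rewrite -HD trmxK.
rewrite trmx_mul lap_sym => ->; by rewrite mxE.
Qed.
End Lap.

Section Spec.
Variable R : realType.
Local Set Implicit Arguments.

Lemma cs_sum (I : finType) (a b : I -> R) :
  (\sum_i a i * b i) ^+ 2 <= (\sum_i a i ^+ 2) * (\sum_i b i ^+ 2).
Proof.
have L : (\sum_i a i ^+ 2) * (\sum_i b i ^+ 2) - (\sum_i a i * b i) ^+ 2 =
   (\sum_i \sum_j (a i * b j - a j * b i) ^+ 2) / 2.
  have E : \sum_i \sum_j (a i * b j - a j * b i) ^+ 2 =
     \sum_i \sum_j (a i ^+ 2 * b j ^+ 2) + \sum_i \sum_j (a j ^+ 2 * b i ^+ 2)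
     - 2 * \sum_i \sum_j (a i * b i * (a j * b j)).
    rewrite -big_split /= big_distrr /= -sumrB; apply: eq_bigr => i _.
    rewrite -big_split /= big_distrr /= -sumrB; apply: eq_bigr => j _; ring.
  rewrite E.
  have F1 : \sum_i \sum_j (a i ^+ 2 * b j ^+ 2) = (\sum_i a i ^+ 2) * (\sum_i b i ^+ 2).
    by rewrite big_distrl /=; apply: eq_bigr => i _; rewrite big_distrr.
  have F2 : \sum_i \sum_j (a j ^+ 2 * b i ^+ 2) = (\sum_i a i ^+ 2) * (\sum_i b i ^+ 2).
    rewrite mulrC big_distrl /=; apply: eq_bigr => i _; rewrite big_distrr /=.
    by apply: eq_bigr => j _; rewrite mulrC.
  have F3 : \sum_i \sum_j (a i * b i * (a j * b j)) = (\sum_i a i * b i) ^+ 2.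
    by rewrite expr2 big_distrl /=; apply: eq_bigr => i _; rewrite big_distrr.
  by rewrite F1 F2 F3; field.
have : 0 <= (\sum_i a i ^+ 2) * (\sum_i b i ^+ 2) - (\sum_i a i * b i) ^+ 2.
  rewrite L; apply: divr_ge0 => //.
  by apply: sumr_ge0 => i _; apply: sumr_ge0 => j _; exact: sqr_ge0.
by rewrite subr_ge0.
Qed.

Definition dot n (u v : 'rV[R]_n) : R := (u *m v^T) 0 0.
Arguments dot {n}.

Lemma dotE n (u v : 'rV[R]_n) : dot u v = \sum_i u 0 i * v 0 i.
Proof. by rewrite /dot mxE; apply: eq_bigr => i _; rewrite mxE. Qed.

Lemma dotC n (u v : 'rV[R]_n) : dot u v = dot v u.
Proof. by rewrite !dotE; apply: eq_bigr => i _; rewrite mulrC. Qed.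

Lemma dot_ge0 n (u : 'rV[R]_n) : 0 <= dot u u.
Proof. by rewrite dotE; apply: sumr_ge0 => i _; rewrite -expr2 sqr_ge0. Qed.

Lemma dotDl n (u v w : 'rV[R]_n) : dot (u + v) w = dot u w + dot v w.
Proof. by rewrite !dotE -big_split; apply: eq_bigr => i _; rewrite mxE mulrDl. Qed.

Lemma dotZl n a (u w : 'rV[R]_n) : dot (a *: u) w = a * dot u w.
Proof. by rewrite !dotE big_distrr; apply: eq_bigr => i _; rewrite mxE -mulrA. Qed.

Lemma dotDr n (u v w : 'rV[R]_n) : dot w (u + v) = dot w u + dot w v.
Proof. by rewrite dotC dotDl !(dotC w). Qed.

Lemma dotZr n a (u w : 'rV[R]_n) : dot w (a *: u) = a * dot w u.
Proof. by rewrite dotC dotZl dotC. Qed.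

Lemma dotNl n (u w : 'rV[R]_n) : dot (- u) w = - dot u w.
Proof. by rewrite -scaleN1r dotZl mulN1r. Qed.

Lemma dotNr n (u w : 'rV[R]_n) : dot w (- u) = - dot w u.
Proof. by rewrite dotC dotNl dotC. Qed.

Lemma dot_mul n (u v : 'rV[R]_n) (M : 'M[R]_n) : dot (u *m M) v = dot u (v *m M^T).
Proof. by rewrite /dot trmx_mul trmxK mulmxA. Qed.

Lemma dot_le n (u v : 'rV[R]_n) : dot u v <= (dot u u + dot v v) / 2.
Proof.
rewrite !dotE -big_split /= big_distrl /=; apply: ler_sum => i _.
rewrite ler_pdivlMr // -subr_ge0.
have -> : (u 0 i * u 0 i + v 0 i * v 0 i - u 0 i * v 0 i * 2) = (u 0 i - v 0 i) ^+ 2 by ring.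
exact: sqr_ge0.
Qed.

Definition msq n (M : 'M[R]_n) : R := \sum_i \sum_j M i j ^+ 2.
Arguments msq {n}.

Lemma msq_ge0 n (M : 'M[R]_n) : 0 <= msq M.
Proof. by apply: sumr_ge0 => i _; apply: sumr_ge0 => j _; exact: sqr_ge0. Qed.

Lemma nb n (y : 'rV[R]_n) (M : 'M[R]_n) :
  dot (y *m M) (y *m M) <= msq M * dot y y.
Proof.
have -> : msq M * dot y y = \sum_j ((\sum_i y 0 i ^+ 2) * (\sum_i M i j ^+ 2)).
  rewrite /msq exchange_big /= big_distrl /=; apply: eq_bigr => j _.
  rewrite mulrC dotE; congr (_ * _); apply: eq_bigr => i _; by rewrite expr2.
rewrite dotE; apply: ler_sum => j _.
rewrite -expr2 mxE.
exact: (cs_sum _ (fun i => y 0 i) (fun i => M i j)).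
Qed.

Definition qf n (M : 'M[R]_n) (y : 'rV[R]_n) : R := dot (y *m M) y.
Arguments qf {n}.

Lemma qf_le n (M : 'M[R]_n) y : qf M y <= (msq M + 1) * dot y y.
Proof.
apply: (le_trans (dot_le _ _)).
have := nb y M; have := dot_ge0 y; have := msq_ge0 M.
have := dot_ge0 (y *m M). nra.
Qed.

Lemma margin n (B : 'M[R]_n) : B^T = B -> (forall y, 0 <= qf B y) ->
  B \in unitmx -> exists2 d : R, 0 < d & forall y, d * dot y y <= qf B y.
Proof.
move=> sB pB uB; set K := msq B + 1; set S := msq (invmx B).
have K0 : 0 < K by rewrite /K ltr_wpDl ?msq_ge0.
exists (1 / (K * S + 1)).
  by rewrite divr_gt0 // ltr_wpDl // mulr_ge0 ?msq_ge0 // ltW.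
move=> y; set w := y *m B.
have H1 : 0 <= qf B (y - K^-1 *: w) by [].
have E : qf B (y - K^-1 *: w) =
   qf B y - 2 * K^-1 * dot w w + K^-1 ^+ 2 * qf B w.
  rewrite /qf mulmxDl -scaleNr -scalemxAl !dotDl !dotDr !dotZl !dotZr.
  have -> : dot (w *m B) y = dot w w by rewrite dot_mul sB.
  rewrite -/(qf B y) -/(qf B w) -/w; ring.
have Hw : qf B w <= K * dot w w by exact: qf_le.
have Hy : dot y y <= S * dot w w.
  by have := nb w (invmx B); rewrite /w -mulmxA mulmxV // mulmx1.
have wq : dot w w <= K * qf B y.
  rewrite E in H1.
  have Ki : 0 < K^-1 by rewrite invr_gt0.
  have : K^-1 ^+ 2 * qf B w <= K^-1 * dot w w.
    by rewrite expr2 -mulrA ler_pM2l // (le_trans (ler_wpM2l (ltW Ki) Hw)) // mulrA mulVf ?mul1r // gt_eqF.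
  move=> HH.
  have : K^-1 * dot w w <= qf B y by lra.
  by rewrite -(ler_pM2l K0) mulrA mulfV ?mul1r // gt_eqF.
have S0 : 0 <= S by exact: msq_ge0.
have q0 := pB y.
have P : 0 < K * S + 1 by rewrite ltr_wpDl // mulr_ge0 // ltW.
rewrite mul1r -(ler_pM2l P) mulrA mulfV ?gt_eqF // mul1r.
have : dot y y <= S * (K * qf B y) by apply: (le_trans Hy); rewrite ler_wpM2l.
nra.
Qed.

Lemma dot_ones_ones n : dot (const_mx 1 : 'rV[R]_n) (const_mx 1) = n%:R.
Proof.
rewrite dotE; under eq_bigr => i _ do rewrite !mxE mulr1.
by rewrite sumr_const card_ord.
Qed.

Lemma spec_ineq n (N : 'M[R]_n) (c : R) :
  N^T = N -> (const_mx 1 : 'rV[R]_n) *m N = 0 -> (forall y, 0 <= qf N y) ->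
  spectral_gap_ge N c ->
  forall y : 'rV[R]_n, dot y (const_mx 1) = 0 -> c * dot y y <= qf N y.
Proof.
move=> sN oN pN gap y0 hy0.
case: (lerP (c * dot y0 y0) (qf N y0)) => // Hlt; exfalso.
set ones : 'rV[R]_n := const_mx 1 in oN hy0 *.
have y0n : y0 != 0.
  apply/eqP => y00; move: Hlt; rewrite y00 /qf mul0mx.
  by rewrite /dot mul0mx mxE mulr0 ltxx.
have n0 : (0 < n)%N.
  case: (posnP n) => // n0; case/eqP: y0n; apply/rowP => i.
  by have := ltn_ord i; rewrite {2}n0.
have nR : 0 < n%:R :> R by rewrite ltr0n.
have dpos : forall y : 'rV[R]_n, y != 0 -> 0 < dot y y.
  move=> y yn; rewrite lt_def dot_ge0 andbT; apply/eqP => dy.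
  move/eqP: yn; apply; apply: sq_rV_eq0; apply/matrixP => i j.
  by rewrite !ord1 [RHS]mxE; exact: dy.
pose E : set R := fun r => exists y, [/\ dot y ones = 0, y != 0 & r = qf N y / dot y y].
have Ene : E (qf N y0 / dot y0 y0) by exists y0.
have lb0 : lbound E 0.
  move=> r [y [_ yn ->]]; apply: divr_ge0 => //; exact: dot_ge0.
have hlb : has_lbound E by exists 0.
set mu := inf E.
have mu0 : 0 <= mu by apply: lb_le_inf => //; exists (qf N y0 / dot y0 y0).
have Hmu1 : forall z, dot z ones = 0 -> mu * dot z z <= qf N z.
  move=> z hz; case: (eqVneq z 0) => [->|zn].
    by rewrite /qf /dot !mul0mx !mxE mulr0.
  have := ge_inf hlb (ex_intro _ z (And3 hz zn erefl)).
  by rewrite ler_pdivlMr ?dpos.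
have Hmu2 : mu < c.
  have := ge_inf hlb Ene; rewrite ler_pdivlMr ?dpos // => H.
  have dp := dpos _ y0n.
  by rewrite -(ltr_pM2r dp); apply: (le_lt_trans H).
set J : 'M[R]_n := ones^T *m ones.
set k := (mu + 1) / n%:R.
set B := N - mu%:M + k *: J.
have yJ : forall y, y *m J = dot y ones *: ones.
  move=> y; rewrite /J mulmxA [y *m ones^T]mx11_scalar -/(dot y ones).
  by rewrite mul_scalar_mx.
have yB : forall y, y *m B = y *m N - mu *: y + (k * dot y ones) *: ones.
  by move=> y; rewrite /B !mulmxDr mulmxN mul_mx_scalar -scalemxAr yJ scalerA.
have qB : forall y, qf B y = qf N y - mu * dot y y + k * dot y ones ^+ 2.
  move=> y; rewrite /qf yB !dotDl dotNl !dotZl -/(qf N y) (dotC ones y); ring.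
have oN' : forall z, dot z (ones *m N) = 0.
  by move=> z; rewrite oN /dot trmx0 mulmx0 mxE.
have decomp : forall y, let a := dot y ones / n%:R in
    qf B y = qf N (y - a *: ones) - mu * dot (y - a *: ones) (y - a *: ones)
             + a ^+ 2 * n%:R.
  move=> y a; rewrite qB.
  have e1 : qf N (y - a *: ones) = qf N y.
    rewrite /qf mulmxBl -scalemxAl oN scaler0 subr0 dotDr dotNr dotZr.
    by rewrite (dot_mul y ones) sN oN' mulr0 subr0.
  have e2 : dot (y - a *: ones) (y - a *: ones) =
      dot y y - 2 * a * dot y ones + a ^+ 2 * n%:R.
    rewrite !dotDl !dotDr !dotNl !dotNr !dotZl !dotZr dot_ones_ones (dotC ones y); ring.
  rewrite e1 e2 /a /k; field; rewrite gt_eqF //.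
have zo : forall y, dot (y - (dot y ones / n%:R) *: ones) ones = 0.
  move=> y; rewrite dotDl dotNl dotZl dot_ones_ones mulfVK ?subrr // gt_eqF //.
have pB : forall y, 0 <= qf B y.
  move=> y; rewrite decomp; apply: addr_ge0; last by rewrite mulr_ge0 // sqr_ge0.
  by rewrite subr_ge0; apply: Hmu1; exact: zo.
have sB : B^T = B.
  rewrite /B !linearD /= linearN /= linearZ /= sN tr_scalar_mx /J trmx_mul trmxK //.
case: (boolP (B \in unitmx)) => uB.
  have [d d0 Hd] := margin sB pB uB.
  have : mu + d <= mu.
    apply: lb_le_inf; first by exists (qf N y0 / dot y0 y0).
    move=> r [z [hz zn ->]].
    have := Hd z; rewrite qB hz expr0n /= mulr0 addr0 => H.
    by rewrite ler_pdivlMr ?dpos // mulrDl; lra.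
  by lra.
have [v vB vn] : exists2 v : 'rV[R]_n, v *m B = 0 & v != 0.
  apply: NNPP => H; move/negP: uB; apply; rewrite -row_free_unit.
  apply: inj_row_free => v Hv; apply: NNPP => Hn; apply: H; exists v => //.
  exact/eqP.
have qv : qf B v = 0 by rewrite /qf vB /dot mul0mx mxE.
have av : dot v ones = 0.
  have := decomp v; rewrite qv /= => H.
  have h1 := Hmu1 _ (zo v).
  have h2 : 0 <= (dot v ones / n%:R) ^+ 2 * n%:R by rewrite mulr_ge0 // sqr_ge0.
  have h3 : (dot v ones / n%:R) ^+ 2 * n%:R = 0 by lra.
  move/eqP: h3; rewrite mulf_eq0 (gt_eqF nR) orbF sqrf_eq0 mulf_eq0 invr_eq0.
  by rewrite (gt_eqF nR) orbF => /eqP.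
have vN : v *m N = mu *: v.
  by move/eqP: vB; rewrite yB av mulr0 scale0r addr0 subr_eq0 => /eqP.
have ev : eigenvalue N mu by apply/eigenvalueP; exists v.
have [mu0' rk] := gap mu ev Hmu2.
have oE : (ones <= eigenspace N mu)%MS.
  by rewrite /eigenspace sub_kermx mulmxBr oN mu0' mul_mx_scalar scale0r subr0.
have vE : (v <= eigenspace N mu)%MS.
  by rewrite /eigenspace sub_kermx mulmxBr vN mul_mx_scalar subrr.
have ro : \rank ones = 1%N.
  rewrite rank_rV; apply/eqP; rewrite eqb1; apply/eqP => o0.
  have := dot_ones_ones n; rewrite -/ones o0 /dot mul0mx mxE => H.
  by move: nR; rewrite -H ltxx.
have Eo : (eigenspace N mu <= ones)%MS.
  by rewrite -(mxrank_leqif_sup oE).2 ro rk.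
have /sub_rVP [al val] := submx_trans vE Eo.
move: av; rewrite val dotZl dot_ones_ones => /eqP; rewrite mulf_eq0 (gt_eqF nR) orbF.
by move/eqP => al0; move: vn; rewrite val al0 scale0r eqxx.
Qed.
End Spec.

Section Alg.
Variable R : realType.



Lemma final_ineq (k J2 P Y X n' : R) :
  1 < k -> 0 <= Y -> 0 <= J2 -> k * Y <= P -> P ^+ 2 <= J2 * Y -> J2 <= X + Y -> 0 < X ->
  J2 + P + n' - X <= X / (k - 1) + n'.
Proof.
move=> k1 Y0 J0 F1 F2 F3 X0.
have P0 : 0 <= P by nra.
have G1 : k ^+ 2 * Y <= J2.
  case: (ltrP 0 Y) => Yp; last by rewrite (_ : Y = 0) ?mulr0 //; lra.
  have h : 0 <= (P - k * Y) * (P + k * Y) by apply: mulr_ge0; nra.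
  have : k ^+ 2 * Y * Y <= J2 * Y by nra.
  by rewrite ler_pM2r.
have G2 : k * P <= J2.
  case: (ltrP 0 P) => Pp; last by rewrite (_ : P = 0) ?mulr0 //; lra.
  have : k * P * P <= J2 * P.
    have : P ^+ 2 * k <= J2 * Y * k by rewrite ler_pM2r //; lra.
    nra.
  by rewrite ler_pM2r.
have H : J2 * (k ^+ 2 - 1) <= k ^+ 2 * X by nra.
have km : 0 < k - 1 by lra.
rewrite addrAC lerD2r ler_pdivlMr // .
have kp : 0 < k by lra.
rewrite -(ler_pM2l kp).
have : k * J2 + k * P <= k * J2 + J2 by lra.
have : J2 * (k + 1) * (k - 1) <= k ^+ 2 * X by nra.
nra.
Qed.

Lemma sum_ind (I : finType) (A : {set I}) : \sum_i ((i \in A)%:R : R) = #|A|%:R.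
Proof.
rewrite -sum1_card natr_sum [RHS]big_mkcond /=; apply: eq_bigr => i _.
by case: (i \in A).
Qed.

Lemma r1_alg (n d x : nat) (E : rel 'I_n) (N1 : {set 'I_n}) (c : R)
    (W : 'I_n -> R) (vs : R) :
  0 < c -> (0 < d)%N -> (0 < n)%N -> (forall i j, E i j = E j i) ->
  (forall y : 'I_n -> R, \sum_i y i = 0 ->
     c * d%:R * \sum_i y i ^+ 2 <= \sum_i y i * \sum_j (E i j)%:R * (y i - y j)) ->
  #|N1| = x -> (0 < x)%N ->
  \sum_i (i \in N1)%:R * (vs - W i) = 1 ->
  (forall i, \sum_j (E i j)%:R * (W i - W j) + (i \in N1)%:R * (W i - vs) + W i = 0) ->
  x%:R^-1 <= vs /\ vs - x%:R^-1 <= x%:R^-1 / (c * d%:R) + n%:R^-1.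
Proof.
move=> c0 d0 n0 Esym spec cx x0 hs hi.
set ind := fun i : 'I_n => ((i \in N1)%:R : R).
set jv := fun i => ind i * (vs - W i).
set Lg := fun (f : 'I_n -> R) i => \sum_j (E i j)%:R * (f i - f j).
have nR : 0 < n%:R :> R by rewrite ltr0n.
have xR : 0 < x%:R :> R by rewrite ltr0n.
have sind : \sum_i ind i = x%:R by rewrite /ind sum_ind cx.
have ind01 : forall i, ind i * ind i = ind i.
  by move=> i; rewrite /ind; case: (i \in N1); rewrite ?mul1r ?mul0r.
have sumL : forall f, \sum_i Lg f i = 0.
  move=> f; rewrite /Lg.
  have : \sum_i \sum_j (E i j)%:R * (f i - f j) =
         - \sum_i \sum_j (E i j)%:R * (f i - f j).
    rewrite [in RHS]exchange_big /= -sumrN; apply: eq_bigr => i _.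
    rewrite -sumrN; apply: eq_bigr => j _; rewrite Esym; ring.
  move=> H; lra.
have sW : \sum_i W i = 1.
  have : \sum_i (Lg W i + ind i * (W i - vs) + W i) = 0.
    by rewrite big1 // => i _; exact: hi.
  rewrite !big_split /= sumL add0r.
  have -> : \sum_i ind i * (W i - vs) = - \sum_i jv i.
    rewrite -sumrN; apply: eq_bigr => i _; rewrite /jv; ring.
  rewrite hs; lra.
set a := (n%:R : R)^-1.
set y := fun i => W i - a.
have sy : \sum_i y i = 0.
  rewrite /y sumrB sW sumr_const card_ord -mulr_natl /a mulfV //; first by rewrite subrr.
  by rewrite gt_eqF.
have Lgy : forall i, Lg y i = Lg W i.
  by move=> i; apply: eq_bigr => j _; rewrite /y; congr (_ * _); ring.
set Y := \sum_i y i ^+ 2.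
set P := \sum_i jv i * y i.
set J2 := \sum_i jv i ^+ 2.
have LgW : forall i, Lg W i = jv i - W i.
  by move=> i; have := hi i; rewrite /jv; rewrite -/(Lg W i); lra.
have sWjv : \sum_i W i * jv i = P + a.
  rewrite -[a]mulr1 -hs -/(jv _) /P big_distrr -big_split /=.
  by apply: eq_bigr => i _; rewrite /y /jv; ring.
have sW2 : \sum_i W i ^+ 2 = Y + a.
  rewrite /Y /y.
  have -> : \sum_i W i ^+ 2 = \sum_i ((W i - a) ^+ 2 + 2 * a * (W i - a) + a ^+ 2).
    by apply: eq_bigr => i _; ring.
  rewrite !big_split /= -big_distrr /= -/(y _) sy mulr0 addr0 sumr_const card_ord.
  rewrite -mulr_natr /a; congr (_ + _); field; by rewrite gt_eqF.
have Qy : \sum_i y i * Lg y i + Y = P.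
  have -> : \sum_i y i * Lg y i = \sum_i W i * Lg W i - a * \sum_i Lg W i.
    rewrite big_distrr -sumrB; apply: eq_bigr => i _; rewrite Lgy /y mulrBl /=; done.
  rewrite sumL mulr0 subr0.
  have -> : \sum_i W i * Lg W i = \sum_i W i * jv i - \sum_i W i ^+ 2.
    rewrite -sumrB; apply: eq_bigr => i _; rewrite LgW; ring.
  rewrite sWjv sW2; ring.
have vsE : vs = J2 + P + a.
  have : \sum_i jv i * (jv i + W i) = vs.
    rewrite -[RHS]mulr1 -hs big_distrr /=; apply: eq_bigr => i _.
    rewrite /jv /ind; case: (i \in N1); rewrite /= ?mul1r ?mul0r; ring.
  have -> : \sum_i jv i * (jv i + W i) = J2 + \sum_i W i * jv i.
    by rewrite /J2 -big_split /=; apply: eq_bigr => i _; ring.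
  by rewrite sWjv => <-; ring.
have Y0 : 0 <= Y by apply: sumr_ge0 => i _; exact: sqr_ge0.
have J0 : 0 <= J2 by apply: sumr_ge0 => i _; exact: sqr_ge0.
have F1 : (c * d%:R + 1) * Y <= P.
  have := spec y sy; rewrite -/Y => H.
  rewrite -Qy mulrDl mul1r lerD2r; apply: (le_trans H).
  exact: lexx.
have F2 : P ^+ 2 <= J2 * Y by exact: cs_sum.
have F3 : J2 <= x%:R^-1 + Y.
  set t := vs - a.
  have jvE : forall i, jv i = ind i * (t - y i).
    by move=> i; rewrite /jv /t /y; congr (_ * _); ring.
  have hs' : x%:R * t - \sum_i ind i * y i = 1.
    rewrite -[RHS]hs -sind big_distrl -sumrB; apply: eq_bigr => i _.
    rewrite /y /t /= -mulrBr; congr (_ * _); ring.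
  have J2E : J2 = x%:R * t ^+ 2 - 2 * t * \sum_i ind i * y i + \sum_i ind i * y i ^+ 2.
    rewrite /J2 -sind big_distrl big_distrr -sumrB -big_split /=.
    apply: eq_bigr => i _; rewrite jvE.
    have := ind01 i; move: (ind i) => z hz.
    have -> : (z * (t - y i)) ^+ 2 = (z * z) * (t - y i) ^+ 2 by ring.
    rewrite hz; ring.
  have Hle : \sum_i ind i * y i ^+ 2 <= Y.
    apply: ler_sum => i _; rewrite /ind; case: (i \in N1); rewrite ?mul1r ?mul0r //.
    exact: sqr_ge0.
  have : x%:R * t ^+ 2 - 2 * t * \sum_i ind i * y i <= x%:R^-1.
    have -> : \sum_i ind i * y i = x%:R * t - 1 by lra.
    rewrite -subr_ge0.
    have -> : x%:R^-1 - (x%:R * t ^+ 2 - 2 * t * (x%:R * t - 1)) =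
              (x%:R * t - 1) ^+ 2 / x%:R.
      by field; rewrite gt_eqF.
    by rewrite divr_ge0 ?sqr_ge0 // ltW.
  lra.
have Xp : 0 < x%:R^-1 :> R by rewrite invr_gt0.
have k1 : 1 < c * d%:R + 1.
  by rewrite ltrDr mulr_gt0 // ltr0n.
split.
  have low : 1 <= x%:R * J2.
    have := @cs_sum R _ ind jv.
    have -> : \sum_i ind i * jv i = 1 by rewrite -hs; apply: eq_bigr => i _; rewrite /jv mulrA ind01.
    have -> : \sum_i ind i ^+ 2 = x%:R by rewrite -sind; apply: eq_bigr => i _; rewrite expr2 ind01.
    by rewrite expr1n.
  have : x%:R^-1 <= J2 by rewrite -(ler_pM2l xR) mulfV ?gt_eqF.
  have P0 : 0 <= P by apply: le_trans F1; rewrite mulr_ge0 // ltW // (lt_trans ltr01).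
  have a0 : 0 <= a by rewrite /a invr_ge0 ltW.
  rewrite vsE; lra.
have := final_ineq _ _ _ _ _ a k1 Y0 J0 F1 F2 F3 Xp.
rewrite (_ : c * d%:R + 1 - 1 = c * d%:R); last by ring.
by rewrite vsE.
Qed.
End Alg.

Section Glue.
Variable R : realType.

Lemma spec_fun n d (E : rel 'I_n) (c : R) : regular_simple E d -> (0 < d)%N ->
  spectral_gap_ge (norm_laplacian R E) c ->
  forall y : 'I_n -> R, \sum_i y i = 0 ->
  c * d%:R * \sum_i y i ^+ 2 <= \sum_i y i * \sum_j (E i j)%:R * (y i - y j).
Proof.
case=> Esym Eirr Edeg d0 gap y sy.
have dR : 0 < d%:R :> R by rewrite ltr0n.
have degR : forall i, \sum_j (E i j)%:R = d%:R :> R.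
  by move=> i; rewrite -gdegE Edeg.
set N := norm_laplacian R E.
have NE : forall i j, N i j = (i == j)%:R - (E i j)%:R / d%:R.
  move=> i j; rewrite mxE !Edeg -expr2 sqrtr_sqr ger0_norm //; exact: ltW.
have sN : N^T = N.
  by apply/matrixP => i j; rewrite mxE !NE eq_sym Esym.
have oN : (const_mx 1 : 'rV[R]_n) *m N = 0.
  apply/rowP => j; rewrite !mxE.
  under eq_bigr => i _ do rewrite mxE mul1r NE.
  rewrite sumrB -big_distrl /=.
  have -> : \sum_i (E i j)%:R = d%:R :> R.
    by rewrite -(degR j); apply: eq_bigr => i _; rewrite Esym.
  rewrite mulfV ?gt_eqF // (bigD1 j) //= eqxx big1 ?addr0 ?subrr //.
  by move=> i /negbTE ->.
have qfE : forall r : 'rV[R]_n, qf R N r =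
    d%:R^-1 * \sum_i r 0 i * \sum_j (E i j)%:R * (r 0 i - r 0 j).
  move=> r; rewrite /qf dotE.
  under eq_bigr => j _ do rewrite mxE big_distrl /=.
  rewrite exchange_big /= big_distrr /=; apply: eq_bigr => i _.
  under eq_bigr => j _ do rewrite NE.
  rewrite big_distrr /= big_distrr /=.
  have -> : \sum_j d%:R^-1 * (r 0 i * ((E i j)%:R * (r 0 i - r 0 j))) =
      r 0 i * r 0 i * (d%:R^-1 * \sum_j (E i j)%:R) -
      \sum_j r 0 i * ((E i j)%:R / d%:R) * r 0 j.
    rewrite big_distrr big_distrr -sumrB /=; apply: eq_bigr => j _; ring.
  rewrite degR mulVf ?gt_eqF // mulr1.
  under eq_bigr => j _ do rewrite mulrBr mulrBl.
  rewrite sumrB (bigD1 i) //= eqxx big1 ?addr0 ?mulr1 //.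
  by move=> j /negbTE; rewrite eq_sym => ->; rewrite !mulr0 mul0r.
have pN : forall r, 0 <= qf R N r.
  move=> r; rewrite qfE; apply: mulr_ge0; first by rewrite invr_ge0 ltW.
  have := @quad_id R _ E Esym (fun i => r 0 i); rewrite /Lap => H.
  have : 0 <= 2 * \sum_i r 0 i * \sum_j (E i j)%:R * (r 0 i - r 0 j).
    rewrite -H; apply: sumr_ge0 => i _; apply: sumr_ge0 => j _.
    by rewrite mulr_ge0 ?sqr_ge0.
  by rewrite pmulr_rge0.
have := spec_ineq sN oN pN gap (\row_i y i).
rewrite qfE !dotE.
under eq_bigr => i _ do rewrite !mxE mulr1.
move=> /(_ sy).
under eq_bigr => i _ do rewrite !mxE -expr2.
under [X in _ <= _ * X -> _]eq_bigr => i _ do under eq_bigr => j _ do rewrite !mxE.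
under [X in _ <= _ * X -> _]eq_bigr => i _ do rewrite !mxE.
move=> H; rewrite -mulrA mulrC -mulrA -ler_pdivlMl //.
by rewrite mulrC.
Qed.

Lemma cgraph_sym n1 n2 (E1 : rel 'I_n1) (N1 : {set 'I_n1}) (N2 : {set 'I_n2}) :
  (forall i j, E1 i j = E1 j i) ->
  forall u w, cgraph E1 N1 N2 u w = cgraph E1 N1 N2 w u.
Proof. by move=> Es [[i|k]|[]] [[j|l]|[]] //=; rewrite Es. Qed.

Lemma cgraph_irr n1 n2 (E1 : rel 'I_n1) (N1 : {set 'I_n1}) (N2 : {set 'I_n2}) :
  (forall i, ~~ E1 i i) -> forall u, cgraph E1 N1 N2 u u = false.
Proof. by move=> Ei [[i|k]|[]] //=; apply/negbTE. Qed.

Lemma sumU1 n1 n2 (G : cvert n1 n2 -> R) :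
  \sum_(v in U1 n1 n2) G v = \sum_i G (inl (inl i)) + G (inr true) + G (inr false).
Proof.
rewrite big_mkcond big_sumType big_sumType big_bool /=.
rewrite [X in _ + X + _]big1 ?addr0 //; last by move=> k _; rewrite inE.
rewrite !inE addrA; congr (_ + _ + _); apply: eq_bigr => i _; by rewrite inE.
Qed.

Lemma sumU2 n1 n2 (G : cvert n1 n2 -> R) :
  \sum_(v in U2 n1 n2) G v = \sum_k G (inl (inr k)) + G (inr true) + G (inr false).
Proof.
rewrite big_mkcond big_sumType big_sumType big_bool /=.
rewrite [X in X + _ + _]big1 ?add0r //; last by move=> k _; rewrite inE.
rewrite !inE addrA; congr (_ + _ + _); apply: eq_bigr => i _; by rewrite inE.
Qed.

Lemma r1_bounds n1 n2 (E1 : rel 'I_n1) (N1 : {set 'I_n1}) (N2 : {set 'I_n2})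
    (d x : nat) (c : R) :
  0 < c -> (0 < d)%N -> (0 < n1)%N -> regular_simple E1 d ->
  spectral_gap_ge (norm_laplacian R E1) c -> #|N1| = x -> (0 < x)%N ->
  let r1 := eff_res_in R (cgraph E1 N1 N2) (U1 n1 n2) (src n1 n2) (snk n1 n2) in
  x%:R^-1 <= r1 /\ r1 - x%:R^-1 <= x%:R^-1 / (c * d%:R) + n1%:R^-1.
Proof.
move=> c0 d0 n0 reg gap cx x0 r1.
have spec := @spec_fun _ _ E1 c reg d0 gap.
case: reg => Es Ei _.
set e := cgraph E1 N1 N2.
have esym := @cgraph_sym _ _ E1 N1 N2 Es.
have eirr := @cgraph_irr _ _ E1 N1 N2 Ei.
pose T1 := {v : cvert n1 n2 | v \in U1 n1 n2}.
pose e1 : rel T1 := @induced _ e (U1 n1 n2).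
have e1sym : forall u w : T1, e1 u w = e1 w u by move=> u w; exact: esym.
have e1irr : forall u : T1, e1 u u = false by move=> u; exact: eirr.
have sU : src n1 n2 \in U1 n1 n2 by rewrite inE.
have tU : snk n1 n2 \in U1 n1 n2 by rewrite inE.
have [i0 i0N] : exists i0, i0 \in N1.
  by apply/set0Pn; rewrite -card_gt0 cx.
have mU : (inl (inl i0) : cvert n1 n2) \in U1 n1 n2 by rewrite inE.
pose s' : T1 := Sub (src n1 n2) sU.
pose t' : T1 := Sub (snk n1 n2) tU.
pose m' : T1 := Sub (inl (inl i0)) mU.
have h1 : e1 s' m' by rewrite /e1 /induced /= i0N.
have h2 : e1 m' t' by [].
have [f Hf] := @pot_exists R _ e1 e1sym e1irr _ _ _ h1 h2.
rewrite /r1 /eff_res_in (@insubT _ (fun v => v \in U1 n1 n2) _ _ sU) (@insubT _ (fun v => v \in U1 n1 n2) _ _ tU).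
rewrite (@eff_res_pot R _ e1 e1sym e1irr _ _ f Hf).
pose F (v : cvert n1 n2) : R :=
  if @insub _ (fun v => v \in U1 n1 n2) T1 v is Some w then f w else 0.
have fF : forall w : T1, f w = F (val w) by move=> w; rewrite /F valK.
have LapF : forall u : T1,
    \sum_(v in U1 n1 n2) (e (val u) v)%:R * (F (val u) - F v) = bvec R T1 s' t' u.
  move=> u; rewrite -Hf /Lap big_sub; apply: eq_bigr => w _.
  by rewrite !fF.
have hs := LapF s'.
rewrite sumU1 /= /bvec eqxx /= in hs.
have miU : forall i, (inl (inl i) : cvert n1 n2) \in U1 n1 n2 by move=> i; rewrite inE.
have hi : forall i, \sum_j (E1 i j)%:R * (F (inl (inl i)) - F (inl (inl j)))
   + (i \in N1)%:R * (F (inl (inl i)) - F (src n1 n2))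
   + (F (inl (inl i)) - F (snk n1 n2)) = 0.
  move=> i; have := LapF (Sub (inl (inl i)) (miU i)).
  by rewrite sumU1 /= /bvec -!val_eqE /= mul1r subrr.
have rb := @r1_alg R _ _ _ E1 N1 c (fun i => F (inl (inl i)) - F (snk n1 n2))
  (F (src n1 n2) - F (snk n1 n2)) c0 d0 n0 Es spec cx x0.
rewrite !mul0r !addr0 subr0 in hs.
have H1 : \sum_i (i \in N1)%:R *
       (F (src n1 n2) - F (snk n1 n2) - (F (inl (inl i)) - F (snk n1 n2))) = 1.
  by rewrite -[RHS]hs; apply: eq_bigr => i _; congr (_ * _); ring.
have H2 : forall i : 'I_n1,
     \sum_j (E1 i j)%:R *
        (F (inl (inl i)) - F (snk n1 n2) - (F (inl (inl j)) - F (snk n1 n2))) +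
     (i \in N1)%:R *
     (F (inl (inl i)) - F (snk n1 n2) - (F (src n1 n2) - F (snk n1 n2))) +
     (F (inl (inl i)) - F (snk n1 n2)) = 0.
  move=> i; rewrite -[RHS](hi i); congr (_ + _ + _).
    by apply: eq_bigr => j _; congr (_ * _); ring.
  by congr (_ * _); ring.
have [lb ub] := rb H1 H2.
by rewrite !fF.
Qed.

Lemma r2_val n1 n2 (E1 : rel 'I_n1) (N1 : {set 'I_n1}) (N2 : {set 'I_n2})
    (ds x : nat) :
  (forall i j, E1 i j = E1 j i) -> (forall i, ~~ E1 i i) ->
  #|N2| = (ds - x)%N -> (x < ds)%N ->
  eff_res_in R (cgraph E1 N1 N2) (U2 n1 n2) (src n1 n2) (snk n1 n2) = 2 / (ds - x)%:R.
Proof.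
move=> Es Ei c2 xds.
set e := cgraph E1 N1 N2.
have esym := @cgraph_sym _ _ E1 N1 N2 Es.
have eirr := @cgraph_irr _ _ E1 N1 N2 Ei.
pose T2 := {v : cvert n1 n2 | v \in U2 n1 n2}.
pose e2 : rel T2 := @induced _ e (U2 n1 n2).
have e2sym : forall u w : T2, e2 u w = e2 w u by move=> u w; exact: esym.
have e2irr : forall u : T2, e2 u u = false by move=> u; exact: eirr.
have sU : src n1 n2 \in U2 n1 n2 by rewrite inE.
have tU : snk n1 n2 \in U2 n1 n2 by rewrite inE.
pose s' : T2 := Sub (src n1 n2) sU.
pose t' : T2 := Sub (snk n1 n2) tU.
rewrite /eff_res_in (@insubT _ (fun v => v \in U2 n1 n2) _ _ sU)
  (@insubT _ (fun v => v \in U2 n1 n2) _ _ tU).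
set k : R := (ds - x)%:R.
have k0 : 0 < k by rewrite ltr0n subn_gt0.
pose F (v : cvert n1 n2) : R :=
  match v with inr true => 2 / k | inl (inr j) => (j \in N2)%:R / k | _ => 0 end.
have sN2 : \sum_l ((l \in N2)%:R : R) / k = 1.
  by rewrite -big_distrl /= sum_ind c2 mulfV // gt_eqF.
have HL : forall u : T2, Lap R T2 e2 (fun w => F (val w)) u = bvec R T2 s' t' u.
  move=> u.
  transitivity (\sum_(v in U2 n1 n2) (e (val u) v)%:R * (F (val u) - F v)).
    by rewrite big_sub.
  rewrite sumU2 /bvec -!val_eqE /=.
  case: u => [[[i|j]|[]] Hu] /=.
  - by move: Hu; rewrite inE.
  - rewrite big1 ?add0r ?mul1r ?subr0 ?subrr; last by move=> l _; rewrite mul0r.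
    have kn : k != 0 by rewrite gt_eqF.
    case: (j \in N2); rewrite /= oppr0 ?mul1r ?mul0r ?add0r ?mul0r //; field => //.
  - rewrite !mul0r !addr0 subr0.
    rewrite -[RHS]sN2; apply: eq_bigr => l _.
    by case: (l \in N2); rewrite ?mul1r ?mul0r //; field; rewrite gt_eqF.
  - rewrite !mul0r !addr0 sub0r -[in RHS]sN2 -sumrN; apply: eq_bigr => l _.
    by rewrite /= mul1r sub0r.
rewrite (@eff_res_pot R _ e2 e2sym e2irr _ _ _ HL) /= subr0.
by [].
Qed.

Lemma ln_ge_half (m : nat) : (2 <= m)%N -> 1 / 2 <= ln (m%:R : R).
Proof.
move=> m2.
have h : sequences.expR (1 / 2 : R) <= 2.
  have := expR_ge1Dx (- (1 / 2) : R); rewrite expRN => H.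
  have ep : 0 < sequences.expR (1 / 2 : R) by exact: expR_gt0.
  have H1 : (1 / 2 : R) <= (sequences.expR (1 / 2))^-1.
    by move: H; rewrite (_ : 1 + - (1/2) = 1 / 2 :> R) //; field.
  have : 1 / 2 * sequences.expR (1 / 2) <= (sequences.expR (1 / 2))^-1 * sequences.expR (1 / 2) :> R.
    by rewrite ler_pM2r.
  rewrite mulVf ?lt0r_neq0 //; lra.
rewrite -[X in X <= _](expRK (1 / 2 : R)) ler_ln ?posrE ?expR_gt0 //.
  by apply: (le_trans h); rewrite ler_nat.
by rewrite ltr0n (leq_trans _ m2).
Qed.
End Glue.

Theorem lemma5p1 (R : realType) (c : R) :
  0 < c ->
  exists C : R, 0 < C /\
  forall (n1 n2 d ds x : nat) (E1 : rel 'I_n1)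
         (N1 : {set 'I_n1}) (N2 : {set 'I_n2}),
    (0 < d)%N -> (0 < x)%N -> (x <= ds)%N ->
    ds%:R * ln (n1%:R : R) <= d%:R ->
    ln (n1%:R : R) ^+ 2 <= d%:R ->
    (2 * d ^ 3 <= n1)%N ->
    regular_simple E1 d ->
    spectral_gap_ge (norm_laplacian R E1) c ->
    #|N1| = x -> #|N2| = (ds - x)%N ->
    let r1 := eff_res_in R (cgraph E1 N1 N2) (U1 n1 n2) (src n1 n2) (snk n1 n2) in
    let r2 := eff_res_in R (cgraph E1 N1 N2) (U2 n1 n2) (src n1 n2) (snk n1 n2) in
    [/\ `|r1 - x%:R^-1| <= C * ln (n1%:R : R) / (d%:R * x%:R),
        `|r1 - x%:R^-1| <= C / (ds%:R * x%:R)
      & (x < ds)%N -> r2 = 2 / (ds - x)%:R].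
Proof.
move=> c0; exists (2 * (c^-1 + 1)); split.
  by rewrite mulr_gt0 // addr_gt0 // invr_gt0.
move=> n1 n2 d ds x E1 N1 N2 d0 x0 xds dsl _ dn reg gap cx c2 r1 r2.
have n12 : (2 <= n1)%N.
  apply: leq_trans dn; rewrite -[2%N]muln1 leq_mul2l /=; by rewrite expn_gt0 d0.
have n0 : (0 < n1)%N by apply: leq_trans n12.
have [lb ub] := @r1_bounds R _ _ E1 N1 N2 _ _ _ c0 d0 n0 reg gap cx x0.
have Ei : forall i, ~~ E1 i i by case: reg.
have Es : forall i j, E1 i j = E1 j i by case: reg.
have L2 := @ln_ge_half R _ n12.
move: lb ub dsl L2; rewrite /r1.
set r := eff_res_in _ _ _ _ _.
set Lg := ln _.
move=> lb ub dsl L2.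
have dR : 1 <= d%:R :> R by rewrite ler1n.
have xR : 1 <= x%:R :> R by rewrite ler1n.
have xsR : x%:R <= ds%:R :> R by rewrite ler_nat.
have sdR : ds%:R <= 2 * d%:R :> R by nra.
have nR : 2 * d%:R ^+ 3 <= n1%:R :> R.
  by rewrite -natrX -(natrM R 2) ler_nat.
have dxn : d%:R * x%:R <= n1%:R :> R.
  have : d%:R * x%:R <= 2 * d%:R ^+ 2 :> R by nra.
  have h2 : 0 <= d%:R ^+ 2 * (d%:R - 1) :> R by rewrite mulr_ge0 ?sqr_ge0 // subr_ge0.
  have : d%:R ^+ 2 <= d%:R ^+ 3 :> R by rewrite exprSr; nra.
  lra.
have DX : 0 < d%:R * x%:R :> R by rewrite mulr_gt0 //; lra.
have SX : 0 < ds%:R * x%:R :> R by rewrite mulr_gt0 //; lra.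
have key : r - x%:R^-1 <= (c^-1 + 1) / (d%:R * x%:R).
  apply: (le_trans ub).
  have -> : x%:R^-1 / (c * d%:R) = c^-1 / (d%:R * x%:R).
    by field; apply/and3P; split; rewrite gt_eqF //; lra.
  rewrite mulrDl mul1r lerD2l lef_pV2 ?posrE //; lra.
have ab : `|r - x%:R^-1| = r - x%:R^-1 by rewrite ger0_norm // subr_ge0.
have q0 : 0 < c^-1 + 1 by rewrite addr_gt0 // invr_gt0.
rewrite ab; split; last by move=> xlt; apply: r2_val.
  apply: (le_trans key); rewrite ler_pM2r ?invr_gt0 //; nra.
apply: (le_trans key).
have -> : 2 * (c^-1 + 1) / (ds%:R * x%:R) = (c^-1 + 1) / (ds%:R * x%:R / 2).
  by field; apply/and3P; split; rewrite gt_eqF //; lra.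
rewrite ler_pM2l // lef_pV2 ?posrE ?divr_gt0 //; nra.
Qed.
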